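(* Let $D$ be an upright long knot diagram (possibly with null vertices) and let $D'$ be obtained from $D$ by the null vertex move: an edge of $D$ with rotation number $\varphi$ is split, by inserting a new null vertex at a point where its tangent points upward, into two consecutive edges with rotation numbers $\varphi'$ and $\varphi''$, where $\varphi'+\varphi''=\varphi$ (or conversely, such a null vertex is removed). Then $\theta_0(D')=\theta_0(D)$.
   Context: An upright long knot diagram is a planar diagram of a long oriented knot such that at every crossing both strands point upward and the knot points upward at its beginning and end. It may contain null vertices (marked points on the knot, away from crossings, where the tangent points upward, whose only role is to cut edges). Edges are the arcs obtained by cutting the knot at all crossings (both strands) and null vertices; they carry distinct labels, $\ell^+$ denotes the label of the edge following $\ell$. Each edge $k$ has a rotation number $\varphi_k$: the signed number of points where its tangent is horizontal and heading right, cups $+1$, caps $-1$. A crossing is $c=(s,i,j)$: sign $s=\pm1$, incoming over-edge $i$, incoming under-edge $j$ (outgoing edges $i^+$, $j^+$); $X$ is the set of crossings. A null vertex with incoming edge $j$ and outgoing edge $k$ is recorded as $(j,k)$. Let $A=I+\sum_cA_c+\sum_{\mathrm{nv}}A_{\mathrm{nv}}$ where $A_c$ is zero except for entries $-T^s$ at $(i,i^+)$, $T^s-1$ at $(i,j^+)$, $-1$ at $(j,j^+)$, and $A_{\mathrm{nv}}$ is zero except for $-1$ at $(j,k)$. Let $G=(g_{\alpha\beta})=A^{-1}$ over $\mathbb{Q}(T)$. Let $T_3=T_1T_2$ and let $g_{\nu\alpha\beta}$ be $g_{\alpha\beta}$ with $T\to T_\nu$ ($\nu=1,2,3$). For crossings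 $c=(s,i,j)$, $c_0=(s_0,i_0,j_0)$, $c_1=(s_1,i_1,j_1)$ and an edge $k$: $$F_1(c)= s\Big[\tfrac12 - g_{3ii} + T_2^s g_{1ii}g_{2ji} - T_2^s g_{3jj}g_{2ji} - (T_2^s-1)g_{3ii}g_{2ji} + (T_3^s-1)g_{2ji}g_{3ji} - g_{1ii}g_{2jj} + 2g_{3ii}g_{2jj} + g_{1ii}g_{3jj} - g_{2ii}g_{3jj}\Big]$$ $$\quad + \frac{s}{T_2^s-1}\Big[(T_1^s-1)T_2^s\big(g_{3jj}g_{1ji}-g_{2jj}g_{1ji}+T_2^sg_{1ji}g_{2ji}\big) + (T_3^s-1)g_{3ji}\big(1-T_2^sg_{1ii}+g_{2ij}+(T_2^s-2)g_{2jj}-(T_1^s-1)(T_2^s+1)g_{1ji}\big)\Big],$$ $$F_2(c_0,c_1)=\frac{s_1(T_1^{s_0}-1)(T_3^{s_1}-1)g_{1j_1i_0}g_{3j_0i_1}}{T_2^{s_1}-1}\Big(T_2^{s_0}g_{2i_1i_0}+g_{2j_1j_0}-T_2^{s_0}g_{2j_1i_0}-g_{2i_1j_0}\Big),\qquad F_3(k)=(g_{3kk}-\tfrac12)\varphi_k,$$ and $\theta_0(D)=\sum_{c\in X}F_1(c)+\sum_{c_0,c_1\in X}F_2(c_0,c_1)+\sum_{\text{edges }k}F_3(k)$ (ordered pairs, including $c_0=c_1$; null vertices contribute no terms of their own). *)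

(* Defs.v *)
From HB Require Import structures.
From mathcomp Require Import all_boot all_order all_algebra.
From mathcomp Require Import fraction.
Set Implicit Arguments. Unset Strict Implicit. Unset Printing Implicit Defensive.
Import Order.TTheory GRing.Theory Num.Theory.
Local Open Scope ring_scope.

(* Edges are labelled 0, 1, ..., nE-1 in the order in which they are   *)
(* traversed along the knot, so that the edge following l is l.+1      *)
(* (l^+ = l+1).                                                        *)
(* A crossing (s,i,j): sign s (true = +1, false = -1), incoming        *)
(* over-edge i, incoming under-edge j; outgoing edges i.+1, j.+1.      *)
(* A null vertex is recorded by its incoming edge j (outgoing j.+1).   *)
Record crossing := Crossing { csign : bool; cover : nat; cunder : nat }.

Record diagram := Diagram {
  nE : nat;
  cross : seq crossing;
  nullv : seq nat;
  rotn : seq int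
}.

(* Well-formedness: every cut point between consecutive edges l, l.+1  *)
(* (l < nE-1) is exactly one of: the over-strand of a crossing, the     *)
(* under-strand of a crossing, or a null vertex.                        *)
Definition wf_diagram (D : diagram) : Prop :=
  [/\ (0 < nE D)%N, size (rotn D) = nE D &
      perm_eq (map cover (cross D) ++ map cunder (cross D) ++ nullv D)
              (iota 0 (nE D).-1)].

(* The null vertex move: a null vertex is inserted on edge k, which is   *)
(* split into the consecutive edges k (rotation number phi1) and k.+1    *)
(* (rotation number phi2); old edges m > k are relabelled m.+1.          *)
Definition shift_lbl (k m : nat) : nat := if (m < k)%N then m else m.+1.

Definition insert_nv (D : diagram) (k : nat) (phi1 phi2 : int) : diagram :=
  Diagram (nE D).+1
    [seq Crossing (csign c) (shift_lbl k (cover c)) (shift_lbl k (cunder c))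
       | c <- cross D]
    (k :: map (shift_lbl k) (nullv D))
    (take k (rotn D) ++ [:: phi1; phi2] ++ drop k.+1 (rotn D)).

Section Theta.
Variable K : fieldType.

Definition sgn (s : bool) : K := if s then 1 else -1.
Definition powS (t : K) (s : bool) : K := if s then t else t^-1.

Definition ind (b : bool) (x : K) : K := if b then x else 0.

Definition Aentry (D : diagram) (t : K) (a b : nat) : K :=
  ((a == b)%N)%:R
  + \sum_(c <- cross D)
      (ind ((a == cover c) && (b == (cover c).+1)) (- powS t (csign c))
       + ind ((a == cover c) && (b == (cunder c).+1)) (powS t (csign c) - 1)
       + ind ((a == cunder c) && (b == (cunder c).+1)) (-1))
  + \sum_(v <- nullv D) ind ((a == v) && (b == v.+1)) (-1).

Definition Amx (D : diagram) (t : K) : 'M[K]_(nE D) :=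
  \matrix_(a, b) Aentry D t a b.

Definition mget n (M : 'M[K]_n) (a b : nat) : K :=
  match insub a, insub b with
  | Some i, Some j => M i j
  | _, _ => 0
  end.

Definition Gent (D : diagram) (t : K) (a b : nat) : K :=
  mget (invmx (Amx D t)) a b.

Variables t1 t2 : K.
Let t3 := t1 * t2.
Let half : K := 2%:R^-1.

Definition F1 (D : diagram) (c : crossing) : K :=
  let g1 := Gent D t1 in let g2 := Gent D t2 in let g3 := Gent D t3 in
  let s := csign c in let i := cover c in let j := cunder c in
  let T1s := powS t1 s in let T2s := powS t2 s in let T3s := powS t3 s in
  sgn s * (half - g3 i i + T2s * g1 i i * g2 j i - T2s * g3 j j * g2 j i
           - (T2s - 1) * g3 i i * g2 j i + (T3s - 1) * g2 j i * g3 j i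
           - g1 i i * g2 j j + 2%:R * g3 i i * g2 j j + g1 i i * g3 j j
           - g2 i i * g3 j j)
  + sgn s / (T2s - 1) *
      ((T1s - 1) * T2s * (g3 j j * g1 j i - g2 j j * g1 j i
                          + T2s * g1 j i * g2 j i)
       + (T3s - 1) * g3 j i * (1 - T2s * g1 i i + g2 i j + (T2s - 2%:R) * g2 j j
                               - (T1s - 1) * (T2s + 1) * g1 j i)).

Definition F2 (D : diagram) (c0 c1 : crossing) : K :=
  let g1 := Gent D t1 in let g2 := Gent D t2 in let g3 := Gent D t3 in
  let s0 := csign c0 in let i0 := cover c0 in let j0 := cunder c0 in
  let s1 := csign c1 in let i1 := cover c1 in let j1 := cunder c1 in
  sgn s1 * (powS t1 s0 - 1) * (powS t3 s1 - 1) * g1 j1 i0 * g3 j0 i1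
    / (powS t2 s1 - 1)
  * (powS t2 s0 * g2 i1 i0 + g2 j1 j0 - powS t2 s0 * g2 j1 i0 - g2 i1 j0).

Definition F3 (D : diagram) (k : nat) : K :=
  (Gent D t3 k k - half) * (nth 0 (rotn D) k)%:~R.

Definition theta0_at (D : diagram) : K :=
  \sum_(c <- cross D) F1 D c
  + \sum_(c0 <- cross D) \sum_(c1 <- cross D) F2 D c0 c1
  + \sum_(k < nE D) F3 D k.

End Theta.

(* The field Q(T1, T2) = Frac(Q[T1][T2]); T1 is the inner variable,   *)
(* T2 the outer one.                                                   *)
Definition QT12 := {fraction {poly {poly rat}}}.
Definition T1 : QT12 := FracField.tofrac (('X : {poly rat})%:P).
Definition T2 : QT12 := FracField.tofrac ('X : {poly {poly rat}}).

Definition theta0 (D : diagram) : QT12 := theta0_at T1 T2 D.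

(* Main.v *)
Require Import Defs.
From mathcomp Require Import all_boot all_order all_algebra fraction.
From mathcomp Require Import zify ring.
Set Implicit Arguments. Unset Strict Implicit. Unset Printing Implicit Defensive.
Import Order.TTheory GRing.Theory Num.Theory.
Local Open Scope ring_scope.

Section Gen.
Variable R : comNzRingType.
Definition rind (b : bool) (x : R) : R := if b then x else 0.
Definition qq (x : R) (s : bool) : R := if s then x ^+ 2 else 1.
Definition Eent (D : diagram) (x : R) (a b : nat) : R :=
  x * ((a == b)%N)%:R
  + \sum_(c <- cross D)
      (rind ((a == Defs.cover c) && (b == (Defs.cover c).+1)) (- qq x (csign c))
       + rind ((a == Defs.cover c) && (b == (cunder c).+1)) (qq x (csign c) - x)
       + rind ((a == cunder c) && (b == (cunder c).+1)) (- x))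
  + \sum_(v <- nullv D) rind ((a == v) && (b == v.+1)) (- x).
End Gen.

Lemma Eent_morph (R S : comNzRingType) (f : {rmorphism R -> S}) D x a b :
  f (Eent D x a b) = Eent D (f x) a b.
Proof.
rewrite /Eent !rmorphD !rmorph_sum rmorphM rmorph_nat; congr (_ + _ + _).
  apply: eq_bigr => c _; rewrite !rmorphD /rind /qq.
  by case: (csign c); do ! case: ifP => _; rewrite ?rmorph0 ?rmorphN ?rmorphB ?rmorphXn ?rmorph1.
by apply: eq_bigr => v _; rewrite /rind; case: ifP; rewrite ?rmorph0 ?rmorphN.
Qed.

Lemma Eent_A (K : fieldType) D (t : K) a b : t != 0 ->
  Eent D t a b = t * Aentry D t a b.
Proof.
move=> t0; rewrite /Eent /Aentry !mulrDr !mulr_sumr; congr (_ + _ + _).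
  apply: eq_bigr => c _; rewrite !mulrDr /rind /ind /qq /powS.
  case: (csign c); do ! case: ifP => _; rewrite ?mulr0 ?addr0 ?add0r //;
  rewrite ?mulrN ?mulrBr ?mulr1 ?expr2 ?mulfV //.
by apply: eq_bigr => v _; rewrite /rind /ind; case: ifP; rewrite ?mulr0 ?mulrN ?mulr1.
Qed.

Lemma Eent1_trig D (a b : nat) : (b < a)%N -> Eent D (1 : rat) a b = 0.
Proof.
move=> ba; rewrite /Eent.
have -> : ((a == b)%N) = false by apply/negbTE; rewrite neq_ltn ba orbT.
rewrite mulr0 add0r big1 ?big1 ?addr0 //.
  by move=> v _; rewrite /rind; case: ifP => // /andP [/eqP Ha /eqP Hb]; lia.
move=> c _; have -> : qq (1 : rat) (csign c) - 1 = 0 by rewrite /qq; case: (csign c); rewrite ?expr1n subrr.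
rewrite /rind; do ! case: ifP => [/andP [/eqP ? /eqP ?]|_]; rewrite ?addr0 ?add0r //; try lia.
Qed.

Lemma Eent1_diag D (a : nat) : Eent D (1 : rat) a a = 1.
Proof.
rewrite /Eent eqxx mulr1 big1 ?big1 ?addr0 //.
  by move=> v _; rewrite /rind; case: ifP => // /andP [/eqP Ha /eqP Hb]; lia.
move=> c _; have -> : qq (1 : rat) (csign c) - 1 = 0 by rewrite /qq; case: (csign c); rewrite ?expr1n subrr.
rewrite /rind; do ! case: ifP => [/andP [/eqP ? /eqP ?]|_]; rewrite ?addr0 ?add0r //; try lia.
Qed.

Definition Pmx D : 'M[{poly rat}]_(nE D) := \matrix_(a, b) Eent D 'X a b.

Lemma detP_neq0 D : \det (Pmx D) != 0.
Proof.
have := det_map_mx (horner_eval (1 : rat)) (Pmx D).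
have -> : map_mx (horner_eval 1) (Pmx D) = \matrix_(a, b) Eent D (1 : rat) a b.
  apply/matrixP => a b; rewrite !mxE Eent_morph /=.
  by rewrite horner_evalE hornerX.
rewrite -det_tr det_trig.
  rewrite big1 => [|i _]; last by rewrite !mxE Eent1_diag.
  by move=> H; apply/eqP => H0; move: H; rewrite H0 rmorph0 => /eqP; rewrite oner_eq0.
by apply/is_trig_mxP => i j lt; rewrite !mxE Eent1_trig.
Qed.

Section Spec.
Variable u : {poly {poly rat}}.
Let pCC := (polyC \o polyC : rat -> {poly {poly rat}}).
Let cfu : commr_rmorph pCC u := fun x => mulrC _ _.
Let chi := horner_morph cfu.

Lemma chi_inj (w : {poly rat}) : u.[w] = 'X -> forall q, q != 0 -> chi q != 0.
Proof.
move=> uw q q0; apply/negP => /eqP H.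
have : (horner_eval w) (chi q) = q.
  rewrite /chi /horner_morph -horner_map /= horner_evalE uw.
  rewrite -map_poly_comp.
  have -> : map_poly ((horner_eval w) \o pCC) q = q^:P.
    by apply: eq_map_poly => c /=; rewrite /pCC /= horner_evalE hornerC.
  exact: comp_polyXr.
by rewrite H rmorph0 => /esym/eqP; rewrite (negbTE q0).
Qed.

Lemma spec_unit D (w : {poly rat}) : u.[w] = 'X ->
  Amx D (FracField.tofrac u) \in unitmx.
Proof.
move=> uw; set t := FracField.tofrac u.
have t0 : t != 0.
  have : chi 'X != 0 by apply: chi_inj uw _ _; rewrite polyX_eq0.
  by rewrite /chi horner_morphX /t tofrac_eq0.
have := detP_neq0 D.
  move/(chi_inj uw); rewrite -tofrac_eq0 /chi.
rewrite -(det_map_mx (horner_morph cfu)) -(det_map_mx (@FracField.tofrac _)).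
have -> : map_mx (@FracField.tofrac _) (map_mx (horner_morph cfu) (Pmx D)) = t *: Amx D t.
  apply/matrixP => a b; rewrite !mxE Eent_morph Eent_morph.
  by rewrite /= horner_morphX -/t Eent_A.
rewrite detZ unitmxE unitfE; apply: contra => /eqP ->; by rewrite mulr0.
Qed.
End Spec.

Lemma unitT1 D : Amx D T1 \in unitmx.
Proof. by apply: (@spec_unit _ _ 0); rewrite hornerC. Qed.
Lemma unitT2 D : Amx D T2 \in unitmx.
Proof. by apply: (@spec_unit _ _ 'X); rewrite hornerX. Qed.
Lemma unitT3 D : Amx D (T1 * T2) \in unitmx.
Proof.
rewrite /T1 /T2 -rmorphM; apply: (@spec_unit _ _ 1).
by rewrite hornerCM hornerX mulr1.
Qed.
Definition ss (k b : nat) : nat := if (b <= k)%N then b else b.+1.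
Definition tau (k x : nat) : nat := if (x <= k)%N then x else x.-1.
Definition te (k r : nat) : nat := if (r < k)%N then r else r.-1.

Ltac natt := rewrite /ss /tau /te /shift_lbl; repeat case: ifP; move=> *;
  try (apply/idP/idP => /eqP ?; apply/eqP); lia.

Lemma L1 k r x : r != k -> (r == shift_lbl k x) = (te k r == x).
Proof. move/eqP=> ?; natt. Qed.
Lemma L2 k c x : c != k.+1 -> (c == (shift_lbl k x).+1) = (tau k c == x.+1).
Proof. move/eqP=> ?; natt. Qed.
Lemma Lk k x : (k == shift_lbl k x) = false.
Proof. apply/eqP; natt. Qed.
Lemma Lk1 k x : (k.+1 == (shift_lbl k x).+1) = false.
Proof. by rewrite eqSS Lk. Qed.
Lemma ss_neq k b : (ss k b == k.+1) = false.
Proof. apply/eqP; natt. Qed.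
Lemma tau_ss k b : tau k (ss k b) = b.
Proof. natt. Qed.
Lemma tau_se k a : tau k (shift_lbl k a) = a.
Proof. natt. Qed.
Lemma ss_k k b : (k == ss k b) = (b == k).
Proof. natt. Qed.
Lemma rs k r b : r != k -> r != k.+1 -> (r == ss k b) = (b == te k r).
Proof. move=> /eqP ? /eqP ?; natt. Qed.
Lemma rs1 k b : (k.+1 == ss k b) = false.
Proof. natt. Qed.
Lemma te1 k : te k k.+1 = k.
Proof. natt. Qed.
Lemma test k r x : r != k -> r != k.+1 -> (te k r == tau k x) = (r == x).
Proof. move=> /eqP ? /eqP ?; natt. Qed.

Section Mx.
Variable K : fieldType.

Definition Nent (D : diagram) (t : K) (a b : nat) : K :=
  \sum_(c <- cross D)
      (ind ((a == Defs.cover c) && (b == (Defs.cover c).+1)) (- powS t (csign c))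
       + ind ((a == Defs.cover c) && (b == (cunder c).+1)) (powS t (csign c) - 1)
       + ind ((a == cunder c) && (b == (cunder c).+1)) (-1))
  + \sum_(v <- nullv D) ind ((a == v) && (b == v.+1)) (-1).

Lemma AentryE D t a b : Aentry D t a b = ((a == b)%N)%:R + Nent D t a b.
Proof. by rewrite /Aentry /Nent addrA. Qed.

Lemma Nent_ins D k p1 p2 t r x :
  Nent (insert_nv D k p1 p2) t r x =
  if r == k then (if x == k.+1 then -1 else 0)
  else if x == k.+1 then 0 else Nent D t (te k r) (tau k x).
Proof.
rewrite /Nent /insert_nv /= big_map big_cons big_map.
case: (eqVneq r k) => [->|rk].
  rewrite big1 ?big1 ?add0r ?addr0.
  - by rewrite /ind; case: ifP.
  - by move=> v _; rewrite Lk.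
  - by move=> c _ /=; rewrite !Lk /ind /= !addr0.
case: (eqVneq x k.+1) => [->|xk].
  rewrite /= big1 ?big1 ?add0r ?addr0 //.
  - by move=> v _; rewrite Lk1 andbF.
  - by move=> c _ /=; rewrite !Lk1 /ind /= !andbF !addr0.
rewrite /ind /= add0r.
by congr (_ + _); apply: eq_bigr => i _ /=; rewrite !(L1 _ rk) !(L2 _ xk).
Qed.
End Mx.

Lemma mgetE (K : fieldType) m (M : 'M[K]_m) (i j : 'I_m) : mget M i j = M i j.
Proof. by rewrite /mget !valK. Qed.

Lemma mget_out (K : fieldType) m (M : 'M[K]_m) a b :
  ~~ (a < m)%N || ~~ (b < m)%N -> mget M a b = 0.
Proof.
rewrite /mget; case/orP => h; first by rewrite insubN.
by case: insubP => // ? _ _; rewrite insubN.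
Qed.

Lemma sum_split (K : fieldType) (F : nat -> K) k m : (k < m)%N ->
  \sum_(c < m.+1) F c = F k.+1 + \sum_(b < m) F (ss k b).
Proof.
elim: m => // m IH hm.
rewrite big_ord_recr [in RHS]big_ord_recr /=.
case: (ltnP k m) => h.
  by rewrite IH // (_ : ss k m = m.+1) ?addrA //; natt.
have km : k = m by lia.
rewrite km addrC; congr (_ + _).
rewrite big_ord_recr /= (_ : ss m m = m); last by natt.
congr (_ + _); apply: eq_bigr => i _; rewrite (_ : ss m i = i) //.
move: (ltn_ord i) => ?; natt.
Qed.

Lemma sum_delta (K : fieldType) (f : nat -> K) m j : (j < m)%N ->
  \sum_(b < m) ((b == j :> nat))%:R * f b = f j.
Proof.
move=> hj; rewrite (bigD1 (Ordinal hj)) //= eqxx mul1r big1 ?addr0 //.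
move=> i ne; rewrite (_ : (i == j :> nat) = false) ?mul0r //.
apply/negbTE; apply: contra ne => /eqP e; apply/eqP/val_inj => /=; exact: e.
Qed.

Section Inv.
Variables (K : fieldType) (D : diagram) (k : nat) (p1 p2 : int) (t : K).
Hypotheses (hk : (k < nE D)%N) (hA : Amx D t \in unitmx).
Hypothesis hA' : Amx (insert_nv D k p1 p2) t \in unitmx.
Local Notation n := (nE D).
Local Notation D' := (insert_nv D k p1 p2).
Local Notation g := (mget (invmx (Amx D t))).
Definition Hn (r x : nat) : K := g (tau k r) (tau k x) - ((r == k.+1) && (x == k))%:R.
Definition Hm : 'M[K]_(n.+1) := \matrix_(r, x) Hn r x.

Lemma row_inv a y : (a < n)%N -> (y < n)%N ->
  \sum_(b < n) Aentry D t a b * g b y = ((a == y)%N)%:R.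
Proof.
move=> ha hy.
have := congr1 (fun M : 'M[K]_n => M (Ordinal ha) (Ordinal hy)) (mulmxV hA).
rewrite !mxE /= => <-; apply: eq_bigr => b _.
by rewrite !mxE -[y]/(nat_of_ord (Ordinal hy)) mgetE.
Qed.

Lemma prod_one : (Amx D' t : 'M_(n.+1)) *m Hm = 1%:M.
Proof.
apply/matrixP => r x; rewrite !mxE.
under eq_bigr do rewrite !mxE.
rewrite (sum_split (fun c => Aentry D' t r c * Hn c x) hk).
have hr := ltn_ord r; have hx := ltn_ord x.
set y := tau k x.
have hy : (y < n)%N by rewrite /y; natt.
under eq_bigr => b _ do rewrite AentryE Nent_ins /Hn ss_neq tau_ss andFb subr0.
rewrite AentryE Nent_ins /Hn eqxx /= (_ : tau k k.+1 = k); last by natt.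
rewrite -/y.
case: (eqVneq (r : nat) k) => [rk|rk].
  rewrite rk /=.
  under eq_bigr => b _ do rewrite ss_k addr0.
  rewrite (sum_delta (fun b => g b y)) // (_ : (k == k.+1) = false); last by natt.
  by rewrite -val_eqE /= rk add0r [(k == x)%N]eq_sym; ring.
rewrite -val_eqE /=.
case: (eqVneq (r : nat) k.+1) => [rk1|rk1].
  rewrite rk1 te1 /= addr0 mul1r.
  under eq_bigr => b _ do rewrite rs1 add0r.
  have R := row_inv hk hy.
  rewrite (eq_bigr (fun b : 'I_n => ((b == k :> nat))%:R * g b y + Nent D t k b * g b y)) in R; last first.
    by move=> b _; rewrite AentryE mulrDl eq_sym.
  rewrite big_split /= (sum_delta (fun b => g b y)) // in R.
  have -> : \sum_(b < n) Nent D t k b * g b y = (k == y)%:R - g k y.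
    by rewrite -R; ring.
  rewrite (_ : g k y - _ + _ = (k == y)%:R - (x == k :> nat)%:R); last by ring.
  have E : (k == y) = (x == k :> nat) || (x == k.+1 :> nat) by rewrite /y; natt.
  rewrite E [(k.+1 == x :> nat)]eq_sym; case: eqP => ?; case: eqP => ? /=; try lia; by ring.
rewrite mulr0n addr0 mul0r add0r.
under eq_bigr => b _ do rewrite (rs _ rk rk1).
have ha : (te k r < n)%N by move/eqP: rk => ?; move/eqP: rk1 => ?; natt.
rewrite -(test x rk rk1) -(row_inv ha hy).
by apply: eq_bigr => b _; rewrite AentryE eq_sym.
Qed.

Lemma inv_ins : invmx (Amx D' t) = Hm.
Proof. by have := mulKmx hA' Hm; rewrite prod_one mulmx1. Qed.

Lemma Gent_ins r x : (r < n.+1)%N -> (x < n.+1)%N -> Gent D' t r x = Hn r x.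
Proof.
move=> hr hx; rewrite /Gent inv_ins -[r]/(nat_of_ord (Ordinal hr)).
by rewrite -[x]/(nat_of_ord (Ordinal hx)) mgetE mxE.
Qed.

Lemma Gent_se a b : Gent D' t (shift_lbl k a) (shift_lbl k b) = Gent D t a b.
Proof.
case: (boolP ((a < n) && (b < n))%N) => [/andP [ha hb]|h].
  rewrite Gent_ins; try by natt.
  by rewrite /Hn !tau_se [(shift_lbl k b == k)]eq_sym Lk andbF subr0.
rewrite /Gent !mget_out //.
  by move: h; rewrite negb_and.
move: h; rewrite negb_and /=; case/orP=> /negP h; apply/orP; [left|right];
  apply/negP => h'; apply: h; move: h'; natt.
Qed.

Lemma Gent_ss b : (b < n)%N -> Gent D' t (ss k b) (ss k b) = Gent D t b b.
Proof.
move=> hb; rewrite Gent_ins; try by natt.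
by rewrite /Hn tau_ss ss_neq subr0.
Qed.

Lemma Gent_k1 : Gent D' t k.+1 k.+1 = Gent D t k k.
Proof.
rewrite Gent_ins; try by natt.
rewrite /Hn (_ : tau k k.+1 = k); last by natt.
by rewrite (_ : (k.+1 == k) = false) ?andbF ?subr0 //; natt.
Qed.
End Inv.

Lemma nth_ins (s : seq int) k p1 p2 b : (k < size s)%N -> (b < size s)%N ->
  nth 0 (take k s ++ [:: p1; p2] ++ drop k.+1 s) (ss k b) =
  if b == k then p1 else nth 0 s b.
Proof.
move=> hk hb; rewrite nth_cat size_takel ?(ltnW hk) // /ss.
case: (ltngtP b k) => h.
- by rewrite h nth_take.
- rewrite (_ : (b.+1 < k)%N = false) /=; last by lia.
  rewrite (_ : b.+1 - k = (b - k.+1).+2)%N /=; last by lia.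
  by rewrite nth_drop; congr nth; lia.
- by rewrite h ltnn subnn.
Qed.

Lemma nth_ins1 (s : seq int) k p1 p2 : (k < size s)%N ->
  nth 0 (take k s ++ [:: p1; p2] ++ drop k.+1 s) k.+1 = p2.
Proof.
move=> hk; rewrite nth_cat size_takel ?(ltnW hk) // ltnNge leqnSn /=.
by rewrite subSn // subnn.
Qed.


Theorem mainTheorem5 (D : diagram) (k : nat) (phi1 phi2 : int) :
  wf_diagram D -> (k < nE D)%N -> phi1 + phi2 = nth 0 (rotn D) k ->
  theta0 (insert_nv D k phi1 phi2) = theta0 D.
Proof.
move=> [n0 hsz _] hk hphi.
have G1 := Gent_se hk (unitT1 D) (unitT1 (insert_nv D k phi1 phi2)).
have G2 := Gent_se hk (unitT2 D) (unitT2 (insert_nv D k phi1 phi2)).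
have G3 := Gent_se hk (unitT3 D) (unitT3 (insert_nv D k phi1 phi2)).
rewrite /theta0 /theta0_at.
congr (_ + _ + _).
- rewrite [cross _]/= big_map; apply: eq_bigr => c _.
  by rewrite /F1 /= !G1 !G2 !G3.
- rewrite [cross _]/= big_map; apply: eq_bigr => c0 _.
  rewrite big_map; apply: eq_bigr => c1 _.
  by rewrite /F2 /= !G1 !G2 !G3.
set D' := insert_nv D k phi1 phi2.
have U3 := unitT3 D; have U3' := unitT3 D'.
set C := (Gent D (T1 * T2) k k - 2%:R^-1) * phi2%:~R.
have E (b : 'I_(nE D)) : F3 T1 T2 D' (ss k b) = F3 T1 T2 D b - ((b == k :> nat))%:R * C.
  rewrite /F3 (Gent_ss hk U3 U3') // [rotn _]/= nth_ins ?hsz //.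
  case: eqP => [->|_]; last by rewrite mul0r subr0.
  by rewrite /C -hphi rmorphD /=; ring.
rewrite [nE _]/= (sum_split (F3 T1 T2 D') hk).
under eq_bigr => b _ do rewrite E.
rewrite sumrB (sum_delta (fun=> C)) //.
rewrite /F3 (Gent_k1 hk U3 U3') [rotn _]/= nth_ins1 ?hsz // -/C.
by ring.
Qed.
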